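(* Let $G$ be a groupoid with finite object set $G_0$, $A$ a unital ring and $\alpha=(A_g,\alpha_g)_{g\in G}$ a unital partial action of $G$ on $A$ with $A=\bigoplus_{e\in G_0}A_e$. Then the ring extension $A\subset A\star_\alpha G$ is separable if and only if, for every $[e]\in G_0/\!\sim$, the extension $A_{[e]}\subset A_{[e]}\star_{\alpha_{[e]}}G_{[e]}$ is separable, where $A_{[e]}=\bigoplus_{f\in[e]}A_f$ and $\alpha_{[e]}=(A_g,\alpha_g)_{g\in G_{[e]}}$.
   Context: A groupoid $G$ is a small category in which every morphism is invertible; $G_0$ is its object set (objects identified with identity morphisms), $s,t$ source and target; $gh$ is defined iff $s(g)=t(h)$; $G(e,f)$ is the set of morphisms from $e$ to $f$; $e\sim f$ iff $G(e,f)\neq\emptyset$; $G_{[e]}$ is the full subgroupoid on the class $[e]$. A unital partial action of $G$ on $A$ is a family $\alpha=(A_g,\alpha_g)_{g\in G}$ where $A_{t(g)}$ is a two-sided ideal of $A$, $A_g=A1_g$ is a two-sided ideal of $A_{t(g)}$ with $1_g$ a central idempotent of $A$, $\alpha_g:A_{g^{-1}}\to A_g$ a ring isomorphism, such that $\alpha_e=\mathrm{id}_{A_e}$ for $e\in G_0$, $\alpha_h^{-1}(A_{g^{-1}}\cap A_h)\subseteq A_{(gh)^{-1}}$ and $\alpha_g(\alpha_h(x))=\alpha_{gh}(x)$ for $x\in\alpha_h^{-1}(A_{g^{-1}}\cap A_h)$, whenever $s(g)=t(h)$. The partial skew groupoid ring $A\star_\alpha G=\bigoplus_{g\in G}A_g\delta_g$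 has multiplication $(a_g\delta_g)(b_h\delta_h)=\alpha_g(\alpha_{g^{-1}}(a_g)b_h)\delta_{gh}$ if $s(g)=t(h)$ and $0$ otherwise; it is unital with $1=\sum_{e\in G_0}1_e\delta_e$, and $A$ is regarded as a subring via $a\mapsto\sum_{e\in G_0}(a1_e)\delta_e$. A ring extension $R\subseteq S$ (unital, same identity) is separable if the multiplication map $S\otimes_R S\to S$ splits as a map of $(S,S)$-bimodules; equivalently there exists $x\in S\otimes_R S$ with $m(x)=1_S$ and $sx=xs$ for all $s\in S$. *)

(* Defs.v *)
From HB Require Import structures.
From mathcomp Require Import all_boot all_order all_algebra.
From Stdlib Require Import Classical IndefiniteDescription.
Set Implicit Arguments. Unset Strict Implicit. Unset Printing Implicit Defensive.
Import GRing.Theory.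
Local Open Scope ring_scope.

(* Groupoids with a finite set of objects.  [gcomp g h] is meaningful  *)
(* only when [gsrc g = gtgt h]; objects are identified with the        *)
(* identity morphisms [gid e].                                         *)
Record groupoid := Groupoid {
  gobj : finType;
  gmor : eqType;
  gsrc : gmor -> gobj;
  gtgt : gmor -> gobj;
  gid : gobj -> gmor;
  gcomp : gmor -> gmor -> gmor;
  ginv : gmor -> gmor;
  gsrc_id : forall e, gsrc (gid e) = e;
  gtgt_id : forall e, gtgt (gid e) = e;
  gsrc_comp : forall g h, gsrc g = gtgt h -> gsrc (gcomp g h) = gsrc h;
  gtgt_comp : forall g h, gsrc g = gtgt h -> gtgt (gcomp g h) = gtgt g;
  gcompA : forall g h k, gsrc g = gtgt h -> gsrc h = gtgt k ->
     gcomp g (gcomp h k) = gcomp (gcomp g h) k;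
  gcomp_idr : forall g, gcomp g (gid (gsrc g)) = g;
  gcomp_idl : forall g, gcomp (gid (gtgt g)) g = g;
  gsrc_inv : forall g, gsrc (ginv g) = gtgt g;
  gtgt_inv : forall g, gtgt (ginv g) = gsrc g;
  gcompV : forall g, gcomp g (ginv g) = gid (gtgt g);
  gcompVl : forall g, gcomp (ginv g) g = gid (gsrc g)
}.

Definition gconn (G : groupoid) (e f : gobj G) : Prop :=
  exists g : gmor G, gsrc g = e /\ gtgt g = f.

Lemma pdec_ex (P : Prop) : exists b : bool, b = true <-> P.
Proof.
case: (classic P) => [HP|HnP]; [exists true | exists false]; split => //.
Qed.
Definition pdec (P : Prop) : bool :=
  proj1_sig (constructive_indefinite_description _ (pdec_ex P)).

Definition gclass (G : groupoid) (e : gobj G) : pred (gobj G) :=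
  fun f => pdec (gconn e f).

(* x belongs to the ideal A u (u a central idempotent) *)
Definition inI (A : pzRingType) (u x : A) : Prop := x * u = x.

(* Unital partial actions: A_g = A (pa_one g), alpha_g = pa_map g      *)
(* (only its values on A_{g^{-1}} matter).                             *)
Record unital_partial_action (G : groupoid) (A : pzRingType) := UPA {
  pa_one : gmor G -> A;
  pa_map : gmor G -> A -> A;
  pa_one_idem : forall g, pa_one g * pa_one g = pa_one g;
  pa_one_central : forall g a, pa_one g * a = a * pa_one g;
  (* A_g is an ideal of A_{t(g)} *)
  pa_sub_tgt : forall g, pa_one g * pa_one (gid (gtgt g)) = pa_one g;
  (* alpha_g : A_{g^-1} -> A_g is a ring isomorphism *)
  pa_add : forall g x y, inI (pa_one (ginv g)) x -> inI (pa_one (ginv g)) y ->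
     pa_map g (x + y) = pa_map g x + pa_map g y;
  pa_mul : forall g x y, inI (pa_one (ginv g)) x -> inI (pa_one (ginv g)) y ->
     pa_map g (x * y) = pa_map g x * pa_map g y;
  pa_into : forall g x, inI (pa_one (ginv g)) x -> inI (pa_one g) (pa_map g x);
  pa_inj : forall g x y, inI (pa_one (ginv g)) x -> inI (pa_one (ginv g)) y ->
     pa_map g x = pa_map g y -> x = y;
  pa_surj : forall g y, inI (pa_one g) y ->
     exists2 x, inI (pa_one (ginv g)) x & pa_map g x = y;
  pa_id : forall e x, inI (pa_one (gid e)) x -> pa_map (gid e) x = x;
  pa_comp : forall g h x, gsrc g = gtgt h ->
     inI (pa_one (ginv h)) x -> inI (pa_one (ginv g)) (pa_map h x) ->
     inI (pa_one (ginv (gcomp g h))) x /\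
     pa_map g (pa_map h x) = pa_map (gcomp g h) x
}.

Section Skew.
Variables (G : groupoid) (A : pzRingType) (al : unital_partial_action G A).

Definition direct_sum_decomp : Prop :=
  (forall a : A, exists af : gobj G -> A,
      (forall e, inI (pa_one al (gid e)) (af e)) /\ a = \sum_(e : gobj G) af e) /\
  (forall af : gobj G -> A, (forall e, inI (pa_one al (gid e)) (af e)) ->
      \sum_(e : gobj G) af e = 0 -> forall e, af e = 0).

Definition in_sub_sum (P : pred (gobj G)) (a : A) : Prop :=
  exists af : gobj G -> A,
    (forall f, inI (pa_one al (gid f)) (af f)) /\ a = \sum_(f : gobj G | P f) af f.

(* Elements of a partial skew groupoid ring, as formal finite sums
   \sum a_i delta_{g_i}, i.e. lists of pairs (g_i, a_i). *)
Definition fsum := seq (gmor G * A).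

Definition coef (x : fsum) (k : gmor G) : A := \sum_(p <- x | p.1 == k) p.2.

(* equality in the partial skew groupoid ring *)
Definition fequiv (x y : fsum) : Prop := forall k, coef x k = coef y k.

(* x is an element of A_P *_alpha G_P, G_P the full subgroupoid on P:
   every term a delta_g has g in G_P and a in A_g *)
Definition valid (P : pred (gobj G)) (x : fsum) : Prop :=
  forall p, p \in x -> [/\ P (gsrc p.1), P (gtgt p.1) & inI (pa_one al p.1) p.2].

(* (a delta_g)(b delta_h) = alpha_g(alpha_{g^-1}(a) b) delta_{gh} if s(g)=t(h), else 0 *)
Definition fmul (x y : fsum) : fsum :=
  [seq (@gcomp G p.1 q.1, pa_map al p.1 (pa_map al (ginv p.1) p.2 * q.2))
     | p : gmor G * A <- x, q : gmor G * A <- [seq q <- y | gsrc p.1 == gtgt q.1]].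

Definition emb (P : pred (gobj G)) (a : A) : fsum :=
  [seq (gid f, a * pa_one al (gid f)) | f <- enum (gobj G) & P f].

(* R-balanced biadditive maps S x S -> M, S = A_P *_alpha G_P,
   R given as a subset of A embedded in S via emb P *)
Definition balanced (P : pred (gobj G)) (R : A -> Prop) (M : zmodType)
    (beta : fsum -> fsum -> M) : Prop :=
  [/\ forall u u' v v', valid P u -> valid P u' -> valid P v -> valid P v' ->
        fequiv u u' -> fequiv v v' -> beta u v = beta u' v',
      forall u u' v, valid P u -> valid P u' -> valid P v ->
        beta (u ++ u') v = beta u v + beta u' v,
      forall u v v', valid P u -> valid P v -> valid P v' ->
        beta u (v ++ v') = beta u v + beta u v' &
      forall u v r, valid P u -> valid P v -> R r ->
        beta (fmul u (emb P r)) v = beta u (fmul (emb P r) v)].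

(* equality in S \otimes_R S of \sum x_i (x) y_i and \sum x'_j (x) y'_j,
   via the universal property of the tensor product *)
Definition tensor_eq (P : pred (gobj G)) (R : A -> Prop)
    (xs ys : seq (fsum * fsum)) : Prop :=
  forall (M : zmodType) (beta : fsum -> fsum -> M), balanced P R beta ->
    \sum_(p <- xs) beta p.1 p.2 = \sum_(p <- ys) beta p.1 p.2.

(* The extension R \subseteq A_P *_alpha G_P is separable: there is
   x = \sum u_i (x) v_i in S \otimes_R S with m(x) = 1_S and s x = x s. *)
Definition separable_ext (P : pred (gobj G)) (R : A -> Prop) : Prop :=
  exists xs : seq (fsum * fsum),
    [/\ forall p, p \in xs -> valid P p.1 /\ valid P p.2,
        fequiv (flatten [seq fmul p.1 p.2 | p <- xs]) (emb P 1) &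
        forall s, valid P s ->
          tensor_eq P R [seq (fmul s p.1, p.2) | p <- xs]
                        [seq (p.1, fmul p.2 s) | p <- xs]].

End Skew.

(* Main.v *)
Require Import Defs.
From HB Require Import structures.
From mathcomp Require Import all_boot all_order all_algebra.
From Stdlib Require Import Classical IndefiniteDescription.
Set Implicit Arguments. Unset Strict Implicit. Unset Printing Implicit Defensive.
Import GRing.Theory.
Local Open Scope ring_scope.

Definition fil (G : groupoid) (A : pzRingType) (Q : pred (gobj G)) (x : fsum G A) : fsum G A :=
  filter (fun t => Q (gsrc t.1)) x.

Lemma fmul_cons G A (al : unital_partial_action G A) p x y :
  fmul al (p :: x) y =
  [seq (@gcomp G p.1 q.1, pa_map al p.1 (pa_map al (ginv p.1) p.2 * q.2))
     | q : gmor G * A <- [seq q <- y | gsrc p.1 == gtgt q.1]] ++ fmul al x y.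
Proof. by []. Qed.

Lemma fil_id G A (Q : pred (gobj G)) (x : fsum G A) : fil Q (fil Q x) = fil Q x.
Proof. exact: filter_id. Qed.

Lemma fil_cat G A (Q : pred (gobj G)) (x y : fsum G A) : fil Q (x ++ y) = fil Q x ++ fil Q y.
Proof. exact: filter_cat. Qed.

Lemma fmul_filL G A (al : unital_partial_action G A) (Q : pred (gobj G))
  (HQ : forall g, Q (gsrc g) = Q (gtgt g)) x y :
  fmul al (fil Q x) y = fil Q (fmul al x y).
Proof.
elim: x => //= p x IH.
case Hp: (Q (gsrc p.1)); rewrite /= fmul_cons fil_cat -IH.
- congr (_ ++ _); rewrite /fil filter_map -filter_predI; congr map.
  apply: eq_filter => q /=.
  case E: (gsrc p.1 == gtgt q.1); rewrite ?andbF // andbT.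
  by rewrite gsrc_comp ?(eqP E) // HQ -(eqP E).
- rewrite [fil Q (map _ _)](_ : _ = [::]) //.
  rewrite /fil filter_map -filter_predI (@eq_filter _ _ pred0) ?filter_pred0 // => q /=.
  case E: (gsrc p.1 == gtgt q.1); rewrite ?andbF // andbT.
  by rewrite gsrc_comp ?(eqP E) // HQ -(eqP E).
Qed.

Lemma fmul_filR G A (al : unital_partial_action G A) (Q : pred (gobj G))
  (HQ : forall g, Q (gsrc g) = Q (gtgt g)) x y :
  fmul al x (fil Q y) = fil Q (fmul al x y).
Proof.
elim: x => //= p x IH.
rewrite !fmul_cons fil_cat -IH /fil.
rewrite filter_map -!filter_predI; congr (map _ _ ++ _).
apply: eq_filter => q /=.
case E: (gsrc p.1 == gtgt q.1); rewrite ?andbF // andbT.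
by rewrite gsrc_comp ?(eqP E).
Qed.

Lemma coef_fil G A (Q : pred (gobj G)) (x : fsum G A) k :
  coef (fil Q x) k = if Q (gsrc k) then coef x k else 0.
Proof.
rewrite /coef /fil big_filter_cond.
case: ifP => Hk.
  apply: eq_bigl => p; case: eqP => [->|]; by rewrite ?Hk ?andbF.
rewrite big_pred0 // => p; case: eqP => [->|]; by rewrite ?Hk ?andbF.
Qed.

Lemma fil_emb G A (al : unital_partial_action G A) (Q : pred (gobj G)) r :
  fil Q (emb al predT r) = emb al Q r.
Proof.
rewrite /fil /emb filter_map -filter_predI; congr map.
by apply: eq_filter => f /=; rewrite gsrc_id andbT.
Qed.

Lemma valid_T G A (al : unital_partial_action G A) Q x : valid al Q x -> valid al predT x.
Proof. by move=> H p /H [_ _ ?]; split. Qed.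

Lemma valid_fil G A (al : unital_partial_action G A) (Q : pred (gobj G))
  (HQ : forall g, Q (gsrc g) = Q (gtgt g)) x :
  valid al predT x -> valid al Q (fil Q x).
Proof.
move=> H p; rewrite mem_filter => /andP [Hq Hp]; have [_ _ ?] := H p Hp.
by split; rewrite // -HQ.
Qed.

Lemma valid_all G A (al : unital_partial_action G A) (Q : pred (gobj G)) x :
  valid al Q x -> fil Q x = x.
Proof. by move=> H; apply/all_filterP/allP => p /H []. Qed.

Lemma gclassP (G : groupoid) (c f : gobj G) : gclass c f <-> gconn c f.
Proof. rewrite /gclass /pdec; by case: (constructive_indefinite_description _ _). Qed.

Lemma gconn_refl (G : groupoid) (e : gobj G) : gconn e e.
Proof. by exists (gid e); rewrite gsrc_id gtgt_id. Qed.

Lemma gconn_sym (G : groupoid) (e f : gobj G) : gconn e f -> gconn f e.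
Proof. by case=> g [<- <-]; exists (ginv g); rewrite gsrc_inv gtgt_inv. Qed.

Lemma gconn_trans (G : groupoid) (e f h : gobj G) : gconn e f -> gconn f h -> gconn e h.
Proof.
case=> g1 [<- E1] [g2 [E2 <-]]; exists (gcomp g2 g1).
have E : gsrc g2 = gtgt g1 by rewrite E2 E1.
by rewrite gsrc_comp // gtgt_comp.
Qed.

Lemma gclass_st (G : groupoid) (c : gobj G) g : gclass c (gsrc g) = gclass c (gtgt g).
Proof.
have H : gconn (gsrc g) (gtgt g) by exists g.
apply/idP/idP => /gclassP Hc; apply/gclassP.
  exact: gconn_trans Hc H.
exact: gconn_trans Hc (gconn_sym H).
Qed.

Lemma gclass_refl (G : groupoid) (c : gobj G) : gclass c c.
Proof. apply/gclassP; exact: gconn_refl. Qed.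

Lemma gclass_eq (G : groupoid) (c d : gobj G) : gclass c d -> gclass c =1 gclass d.
Proof.
move/gclassP => H f; apply/idP/idP => /gclassP Hf; apply/gclassP.
  exact: gconn_trans (gconn_sym H) Hf.
exact: gconn_trans H Hf.
Qed.

Lemma gclass_sym (G : groupoid) (c d : gobj G) : gclass c d -> gclass d c.
Proof. by move/gclassP/gconn_sym/gclassP. Qed.

Lemma one_orth G A (al : unital_partial_action G A) :
  direct_sum_decomp al -> forall e f : gobj G, e != f ->
  pa_one al (gid e) * pa_one al (gid f) = 0.
Proof.
move=> [_ Hds] e f nef.
set x := pa_one al (gid e) * pa_one al (gid f).
have xe : x * pa_one al (gid e) = x.
  by rewrite /x -mulrA -pa_one_central mulrA pa_one_idem.
have xf : x * pa_one al (gid f) = x by rewrite /x -mulrA pa_one_idem.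
pose af (g : gobj G) := (if g == e then x else 0) - (if g == f then x else 0).
have Haf : forall g, inI (pa_one al (gid g)) (af g).
  move=> g; rewrite /inI /af mulrBl.
  case: eqP => [->|_]; case: eqP => [->|_]; by rewrite ?mul0r ?xe ?xf.
have Hs : \sum_g af g = 0.
  rewrite /af sumrB -!big_mkcond /= !big_pred1_eq; exact: subrr.
have := Hds af Haf Hs e; rewrite /af eqxx (negbTE nef) subr0; exact.
Qed.

Lemma emb_proj G A (al : unital_partial_action G A) (Q : pred (gobj G)) r :
  direct_sum_decomp al -> exists2 r', in_sub_sum al Q r' & emb al Q r = emb al Q r'.
Proof.
move=> Hds; exists (\sum_(f | Q f) r * pa_one al (gid f)).
  exists (fun f => r * pa_one al (gid f)); split => // f.
  by rewrite /inI -mulrA pa_one_idem.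
rewrite /emb; apply/eq_in_map => f; rewrite mem_filter => /andP [Hf _].
congr pair; rewrite mulr_suml (bigD1 f) //= -mulrA pa_one_idem big1 ?addr0 //.
move=> g /andP [_ ngf]; by rewrite -mulrA one_orth ?mulr0.
Qed.

Lemma fmul_filLR G A (al : unital_partial_action G A) (Q : pred (gobj G))
  (HQ : forall g, Q (gsrc g) = Q (gtgt g)) x y :
  fmul al (fil Q x) y = fmul al (fil Q x) (fil Q y).
Proof. by rewrite fmul_filR // -fmul_filL // fil_id. Qed.

Lemma fmul_filRL G A (al : unital_partial_action G A) (Q : pred (gobj G))
  (HQ : forall g, Q (gsrc g) = Q (gtgt g)) x y :
  fmul al x (fil Q y) = fmul al (fil Q x) (fil Q y).
Proof. by rewrite fmul_filL // -fmul_filR // fil_id. Qed.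

Lemma bal_restrict G A (al : unital_partial_action G A) (Q : pred (gobj G))
  (HQ : forall g, Q (gsrc g) = Q (gtgt g)) (R : A -> Prop) (M : zmodType)
  (beta : fsum G A -> fsum G A -> M) :
  balanced al predT (fun _ => True) beta -> balanced al Q R beta.
Proof.
case=> h1 h2 h3 h4; split.
- move=> u u' v v' Hu Hu' Hv Hv' e1 e2; apply: h1 => //; [exact: valid_T Hu|exact: valid_T Hu'|exact: valid_T Hv|exact: valid_T Hv'].
- move=> u u' v Hu Hu' Hv; apply: h2; [exact: valid_T Hu|exact: valid_T Hu'|exact: valid_T Hv].
- move=> u v v' Hu Hv Hv'; apply: h3; [exact: valid_T Hu|exact: valid_T Hv|exact: valid_T Hv'].
- move=> u v r Hu Hv _.
  rewrite -fil_emb fmul_filR // -fmul_filL // (valid_all Hu).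
  rewrite fmul_filL // -fmul_filR // (valid_all Hv).
  apply: h4 => //; [exact: valid_T Hu|exact: valid_T Hv].
Qed.

Lemma bal_lift G A (al : unital_partial_action G A) (Q : pred (gobj G))
  (HQ : forall g, Q (gsrc g) = Q (gtgt g)) (M : zmodType)
  (beta : fsum G A -> fsum G A -> M) :
  direct_sum_decomp al ->
  balanced al Q (in_sub_sum al Q) beta ->
  balanced al predT (fun _ => True) (fun x y => beta (fil Q x) (fil Q y)).
Proof.
move=> Hds [h1 h2 h3 h4]; split.
- move=> u u' v v' Hu Hu' Hv Hv' e1 e2; apply: h1; try exact: valid_fil.
  + by move=> k; rewrite !coef_fil e1.
  + by move=> k; rewrite !coef_fil e2.
- move=> u u' v Hu Hu' Hv /=; rewrite fil_cat; apply: h2; exact: valid_fil.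
- move=> u v v' Hu Hv Hv' /=; rewrite fil_cat; apply: h3; exact: valid_fil.
- move=> u v r Hu Hv _ /=.
  rewrite -fmul_filL // fmul_filLR // fil_emb.
  rewrite -fmul_filR // fmul_filRL // fil_emb.
  have [r' Hr' ->] := emb_proj Q r Hds.
  apply: h4 => //; exact: valid_fil.
Qed.

Lemma coef_cat G A (x y : fsum G A) k : coef (x ++ y) k = coef x k + coef y k.
Proof. by rewrite /coef big_cat. Qed.

Lemma coef_flatten G A (L : seq (fsum G A)) k :
  coef (flatten L) k = \sum_(x <- L) coef x k.
Proof.
elim: L => [|x L IH] /=; first by rewrite /coef !big_nil.
by rewrite coef_cat IH big_cons.
Qed.

Definition crep (G : groupoid) (c : gobj G) : gobj G := odflt c [pick f | gclass c f].

Lemma crep_in (G : groupoid) (c : gobj G) : gclass c (crep c).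
Proof. rewrite /crep; case: pickP => [f Hf|_] //=; exact: gclass_refl. Qed.

Lemma crep_eq (G : groupoid) (c d : gobj G) : gclass c d -> crep c = crep d.
Proof.
move=> H; have E : [pick f | gclass c f] = [pick f | gclass d f].
  by apply: eq_pick => f; exact: gclass_eq.
rewrite /crep E; case: pickP => [//|H']; by have := H' d; rewrite gclass_refl.
Qed.

Definition reps (G : groupoid) : seq (gobj G) := [seq c <- enum (gobj G) | crep c == c].

Lemma reps_count (G : groupoid) (f : gobj G) : count (fun c => gclass c f) (reps G) = 1%N.
Proof.
rewrite (@eq_in_count _ _ (pred1 (crep f))).
  have Hu : uniq (reps G) by apply: filter_uniq; exact: enum_uniq.
  rewrite (count_uniq_mem _ Hu).
  by rewrite /reps mem_filter mem_enum -(crep_eq (crep_in f)) eqxx.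
move=> c; rewrite mem_filter => /andP [/eqP Hc _] /=.
apply/idP/eqP => [H|->].
  by rewrite -Hc; apply: crep_eq.
exact: gclass_sym (crep_in f).
Qed.

Lemma sum_reps (G : groupoid) (M : zmodType) (f : gobj G) (a : M) :
  \sum_(c <- reps G) (if gclass c f then a else 0) = a.
Proof. by rewrite -big_mkcond big_const_seq reps_count /= addr0. Qed.

Theorem proposition3p1 (G : groupoid) (A : pzRingType)
    (al : unital_partial_action G A) :
  direct_sum_decomp al ->
  (separable_ext al predT (fun _ => True) <->
   forall e : gobj G,
     separable_ext al (gclass e) (in_sub_sum al (gclass e))).
Proof.
move=> Hds; split.
- move=> [xs [Hv Hm Hc]] e.
  have HQ := @gclass_st G e.
  exists [seq (fil (gclass e) p.1, fil (gclass e) p.2) | p <- xs]; split.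
  + move=> p /mapP [q Hq ->] /=; have [H1 H2] := Hv q Hq.
    by split; apply: valid_fil.
  + rewrite -map_comp (@eq_map _ _ _ (fun p => fil (gclass e) (fmul al p.1 p.2))); last first.
      by move=> p /=; rewrite -fmul_filRL // fmul_filR.
    rewrite (map_comp (fil (gclass e))) -filter_flatten -/(fil _ _) => k.
    by rewrite coef_fil Hm -coef_fil fil_emb.
  + move=> s Hs M beta Hb.
    have := Hc s (valid_T Hs) M _ (bal_lift HQ Hds Hb).
    rewrite /= !big_map /= => H.
    transitivity (\sum_(i <- xs) beta (fil (gclass e) (fmul al s i.1)) (fil (gclass e) i.2)).
      by apply: eq_bigr => p _; rewrite fmul_filR.
    rewrite H; apply: eq_bigr => p _; by rewrite fmul_filL.
- move=> H.
  pose X e := proj1_sig (constructive_indefinite_description _ (H e)).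
  have HX : forall e, _ := fun e => proj2_sig (constructive_indefinite_description _ (H e)).
  exists (flatten [seq X c | c <- reps G]); split.
  + move=> p /flattenP [l /mapP [c _ ->] Hp].
    have [Hv _ _] := HX c; have [H1 H2] := Hv p Hp.
    by split; [exact: valid_T H1|exact: valid_T H2].
  + move=> k; rewrite map_flatten coef_flatten big_flatten /= !big_map.
    transitivity (\sum_(c <- reps G) (if gclass c (gsrc k) then coef (emb al predT 1) k else 0)); last first.
      exact: sum_reps.
    apply: eq_bigr => c _; rewrite -coef_flatten -/(X c).
    have [_ Hm _] := HX c.
    by rewrite Hm -fil_emb coef_fil.
  + move=> s Hs M beta Hb.
    rewrite !big_map !big_flatten /= !big_map.
    apply: eq_bigr => c _.
    have HQ := @gclass_st G c.
    have [Hv _ Hc] := HX c.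
    have := Hc (fil (gclass c) s) (valid_fil HQ Hs) M beta (bal_restrict HQ _ Hb).
    rewrite /tensor_eq !big_map /= => E.
    transitivity (\sum_(i <- X c) beta (fmul al (fil (gclass c) s) i.1) i.2).
      apply: eq_big_seq => p Hp; have [H1 H2] := Hv p Hp.
      by rewrite fmul_filL // -fmul_filR // (valid_all H1).
    rewrite E; apply: eq_big_seq => p Hp; have [H1 H2] := Hv p Hp.
    by rewrite fmul_filR // -fmul_filL // (valid_all H2).
Qed.
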